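(* Let $\mathcal{G}=(\mathcal{V},E)$ be an undirected graph, $\mathcal{V}=\{1,\dots,N\}$, let $X=(X_1,\dots,X_N)$ be a Markov random field on $\mathcal{G}$ with $X_i$ taking values in a finite alphabet $\mathcal{X}_i$, let $g_i:\mathcal{X}_i\to\mathcal{Y}_i$ be functions, and $Y_i=g_i(X_i)$, $Y=(Y_1,\dots,Y_N)$. (i) If $H(Y)=H(X)$, then $H(X_i\mid Y_i,X_{\mathcal{N}_i})=0$ for every $i\in\mathcal{V}$. (ii) If $\mathcal{G}$ is chordal and there exists a permutation $v_1,\dots,v_N$ of $\mathcal{V}$ such that, with $A_{v_i}=\mathcal{N}_{v_i}\cap\{v_1,\dots,v_{i-1}\}$, one has $H(X_{v_i}\mid Y_{v_i},X_{A_{v_i}})=0$ for every $i=1,\dots,N$, then $H(Y)=H(X)$.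
   Context: $\mathcal{N}_i$ is the set of neighbors of $i$ in $\mathcal{G}$; $X_A=(X_j,j\in A)$. $X$ is a Markov random field on $\mathcal{G}$ if for every $i$, $p_{X_i|X_{\mathcal{V}\setminus\{i\}}}=p_{X_i|X_{\mathcal{N}_i}}$. A graph is chordal if every induced cycle has length three. $H$ denotes Shannon (conditional) entropy. No positivity of $p_X$ is assumed. *)

(* Defs.v *)
From mathcomp Require Import all_boot all_order all_algebra.
From mathcomp Require Import reals exp.
Set Implicit Arguments. Unset Strict Implicit. Unset Printing Implicit Defensive.
Import Order.TTheory GRing.Theory Num.Theory.
Local Open Scope ring_scope.

Section Info.
Variable R : realType.

Definition is_pmf (O : finType) (p : {ffun O -> R}) : Prop :=
  (forall o, 0 <= p o) /\ \sum_(o : O) p o = 1.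

Definition dist (O T : finType) (p : {ffun O -> R}) (Z : O -> T) (t : T) : R :=
  \sum_(o : O | Z o == t) p o.

(* Shannon entropy (natural logarithm; convention 0 log 0 = 0, since ln 0 = 0). *)
Definition entropy (O T : finType) (p : {ffun O -> R}) (Z : O -> T) : R :=
  - \sum_(t : T) dist p Z t * ln (dist p Z t).

Definition cond_entropy (O T U : finType) (p : {ffun O -> R})
  (Z : O -> T) (W : O -> U) : R :=
  entropy p (fun o => (Z o, W o)) - entropy p W.

Definition cond_pmf (O T U : finType) (p : {ffun O -> R})
  (Z : O -> T) (W : O -> U) (z : T) (w : U) : R :=
  dist p (fun o => (Z o, W o)) (z, w) / dist p W w.
End Info.

Section Graph.
Variable N : nat.

Definition restr (A : 'I_N -> finType) (S : {set 'I_N})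
  (x : {dffun forall j : 'I_N, A j}) : {dffun forall j : 'I_N, option (A j)} :=
  [ffun j => if j \in S then Some (x j) else None].

Definition nbhd (e : rel 'I_N) (i : 'I_N) : {set 'I_N} := [set j | e i j].

Definition simple_graph (e : rel 'I_N) : Prop := symmetric e /\ irreflexive e.

(* Chordal: every cycle of length >= 4 (distinct vertices) has a chord,
   i.e. every induced cycle has length 3. *)
Definition chordal (e : rel 'I_N) : Prop :=
  forall s : seq 'I_N, uniq s -> (4 <= size s)%N -> cycle e s ->
  exists x y : 'I_N, [/\ x \in s, y \in s, e x y,
     ((index x s).+1 < index y s)%N
   & ~~ ((index x s == 0%N) && (index y s == (size s).-1))].
  
(* X is a Markov random field on (V, e) w.r.t. pmf p:
   p_{X_i | X_{V \ i}} = p_{X_i | X_{N_i}} (wherever the former is defined). *)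
Definition markov_random_field (R : realType) (A : 'I_N -> finType)
  (p : {ffun {dffun forall j : 'I_N, A j} -> R}) (e : rel 'I_N) : Prop :=
  forall (i : 'I_N) (x : {dffun forall j : 'I_N, A j}),
    0 < dist p (restr [set~ i]) (restr [set~ i] x) ->
    cond_pmf p (fun y => y i) (restr [set~ i]) (x i) (restr [set~ i] x)
    = cond_pmf p (fun y => y i) (restr (nbhd e i)) (x i) (restr (nbhd e i) x).
End Graph.

(* Main.v *)
Require Import Defs.
From mathcomp Require Import all_boot all_order all_algebra.
From mathcomp Require Import reals exp.
Import Order.TTheory GRing.Theory Num.Theory.
Local Open Scope ring_scope.

Local Set Implicit Arguments.
Section Ent.
Variables (R : realType) (O : finType) (p : {ffun O -> R}).
Hypothesis p0 : forall o, 0 <= p o.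

Lemma entropyE (T : finType) (Z : O -> T) :
  entropy p Z = - \sum_o p o * ln (dist p Z (Z o)).
Proof.
rewrite /entropy; congr (- _).
rewrite (partition_big Z predT) //=; apply: eq_bigr => t _.
rewrite /dist big_distrl /=; apply: eq_big => o; first by [].
by move/eqP => ->.
Qed.

Lemma dist_ge (T : finType) (Z : O -> T) o : p o <= dist p Z (Z o).
Proof.
rewrite /dist (bigD1 o) //= lerDl; apply: sumr_ge0 => *; exact: p0.
Qed.

Lemma entropy_eq (T T' : finType) (Z : O -> T) (Z' : O -> T') :
  (forall o o', 0 < p o -> 0 < p o' -> (Z o == Z o') = (Z' o == Z' o')) ->
  entropy p Z = entropy p Z'.
Proof.
move=> H; rewrite !entropyE; congr (- _); apply: eq_bigr => o _.
have := p0 o; rewrite le_eqVlt => /orP [/eqP <-|po]; first by rewrite !mul0r.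
congr (_ * ln _); rewrite /dist [LHS]big_mkcond [RHS]big_mkcond.
apply: eq_bigr => o' _.
have := p0 o'; rewrite le_eqVlt => /orP [/eqP <-|po']; first by rewrite !if_same.
by rewrite H.
Qed.

Lemma cond0 (T U : finType) (Z : O -> T) (W : O -> U) :
  (forall o o', 0 < p o -> 0 < p o' -> W o = W o' -> Z o = Z o') ->
  cond_entropy p Z W = 0.
Proof.
move=> H; rewrite /cond_entropy; apply/eqP; rewrite subr_eq0; apply/eqP.
apply: entropy_eq => o o' po po'; rewrite xpair_eqE.
case: (W o =P W o') => [hw|]; last by rewrite andbF.
by rewrite (H _ _ po po' hw) !eqxx.
Qed.

Lemma cond0_inv (T U : finType) (Z : O -> T) (W : O -> U) :
  cond_entropy p Z W = 0 ->
  (forall o o', 0 < p o -> 0 < p o' -> W o = W o' -> Z o = Z o').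
Proof.
rewrite /cond_entropy !entropyE opprK addrC -sumrB.
under eq_bigr do rewrite -mulrBr.
set dW := fun o => dist p W (W o).
set dZW := fun o => dist p (fun o => (Z o, W o)) (Z o, W o).
have dsplit : forall o, dW o = dZW o + \sum_(o' | (W o' == W o) && (Z o' != Z o)) p o'.
  move=> o; rewrite /dZW /dW /dist (bigID (fun o' => Z o' == Z o)) /=; congr (_ + _).
  by apply: eq_bigl => o'; rewrite xpair_eqE andbC.
have dpos : forall o, 0 < p o -> 0 < dZW o.
  move=> o po; apply: (lt_le_trans po); exact: dist_ge.
have dle : forall o, dZW o <= dW o.
  by move=> o; rewrite dsplit lerDl; apply: sumr_ge0 => *; exact: p0.
have nn : forall i, true -> 0 <= p i * (ln (dW i) - ln (dZW i)).
  move=> i _; have := p0 i; rewrite le_eqVlt => /orP [/eqP <-|pi]; first by rewrite mul0r.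
  rewrite mulr_ge0 ?subr_ge0 // ?(ltW pi) // ler_ln ?posrE ?dle ?dpos //.
  exact: lt_le_trans (dpos _ pi) (dle i).
move/(psumr_eq0P nn) => H o o' po po' hw.
have /= := H o isT.
move=> /eqP; rewrite mulf_eq0 (gt_eqF po) /= subr_eq0 => /eqP.
move/ln_inj; rewrite !posrE => /(_ (lt_le_trans (dpos _ po) (dle o)) (dpos _ po)).
rewrite dsplit => /(canRL (addKr (dZW o))); rewrite addNr.
move/psumr_eq0P => H2.
apply/eqP; apply: contraT => hz.
have := H2 (fun o' _ => p0 o') o'.
rewrite hw eqxx eq_sym hz => /(_ isT) /eqP.
by rewrite (gt_eqF po').
Qed.
Lemma dist_inj (T : finType) (Z : O -> T) o :
  (forall o', Z o' = Z o -> o' = o) -> dist p Z (Z o) = p o.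
Proof.
move=> H; rewrite /dist (big_pred1 o) // => o'; rewrite /= .
by apply/eqP/eqP => [/H|->].
Qed.
End Ent.
Local Unset Implicit Arguments.

Theorem proposition4 (R : realType) (N : nat) (e : rel 'I_N)
  (A B : 'I_N -> finType) (p : {ffun {dffun forall j : 'I_N, A j} -> R})
  (g : forall i : 'I_N, A i -> B i) :
  simple_graph e -> is_pmf p -> markov_random_field p e ->
  let X := fun x : {dffun forall j : 'I_N, A j} => x in
  let Y := fun x : {dffun forall j : 'I_N, A j} =>
             [ffun i => g i (x i)] : {dffun forall j : 'I_N, B j} in
  (* (i) *)
  (entropy p Y = entropy p X ->
     forall i : 'I_N,
       cond_entropy p (fun x => x i) (fun x => (g i (x i), restr (nbhd e i) x)) = 0)
  /\
  (* (ii) *)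
  (chordal e ->
   forall v : 'I_N -> 'I_N, bijective v ->
   (forall i : 'I_N,
      let Av := nbhd e (v i) :&: [set v k | k : 'I_N & (k < i)%N] in
      cond_entropy p (fun x => x (v i)) (fun x => (g (v i) (x (v i)), restr Av x)) = 0) ->
   entropy p Y = entropy p X).
Proof.
move=> [esym eirr] [p0 p1] hM X Y.
have hXY : entropy p (fun o => (X o, Y o)) = entropy p X.
  apply: (@entropy_eq R _ p p0 _ _ (fun o => (X o, Y o)) X) => o o' _ _; rewrite xpair_eqE.
  rewrite /X /=; by case: eqP => [->|]; rewrite ?eqxx ?andbF.
split.
- move=> hE i.
  have inj : forall x x', 0 < p x -> 0 < p x' -> Y x = Y x' -> X x = X x'.
    apply: (@cond0_inv R _ p p0 _ _ X Y); by rewrite /cond_entropy hXY hE subrr.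
  apply: (@cond0 R _ p p0) => x x' px px' [hg hN].
  pose z : {dffun forall j, A j} := finfun (fun j => if j == i then x j else x' j).
  have zi : z i = x i by rewrite ffunE eqxx.
  have zj : forall j, j != i -> z j = x' j by move=> j /negbTE hj; rewrite ffunE hj.
  have rz1 : restr [set~ i] z = restr [set~ i] x'.
    apply/ffunP => j; rewrite !ffunE in_setC1.
    case: (boolP (j == i)) => //= hj; by rewrite zj.
  have rzN : restr (nbhd e i) z = restr (nbhd e i) x.
    rewrite hN; apply/ffunP => j; rewrite !ffunE inE; case: ifP => // hj.
    have hji : j != i by apply: contraTneq hj => ->; rewrite eirr.
    by rewrite (negbTE hji).
  have dz : dist p (fun y => (y i, restr [set~ i] y)) (z i, restr [set~ i] z) = p z.
    apply: dist_inj => y [hi hr].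
    apply/ffunP => j; case: (boolP (j == i)) => [/eqP ->|hj] //.
    move/ffunP: hr => /(_ j); rewrite !ffunE in_setC1 hj /=; by case.
  have pz : 0 < p z.
    have hd : 0 < dist p (restr [set~ i]) (restr [set~ i] z).
      rewrite rz1; apply: (lt_le_trans px'); exact: dist_ge.
    have := hM i z hd; rewrite /cond_pmf dz zi rzN => heq.
    have rpos : 0 < dist p (fun y => (y i, restr (nbhd e i) y)) (x i, restr (nbhd e i) x)
                    / dist p (restr (nbhd e i)) (restr (nbhd e i) x).
      by rewrite divr_gt0 // (lt_le_trans px) //; exact: dist_ge.
    have := p0 z; rewrite le_eqVlt => /orP [/eqP pz0|//].
    by rewrite -heq -pz0 mul0r ltxx in rpos.
  have hYz : Y z = Y x'.
    apply/ffunP => j; rewrite !ffunE.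
    case: (boolP (j == i)) => [/eqP ->|hj]; first by rewrite ?eqxx.
    by rewrite ?(negbTE hj).
  have := inj z x' pz px' hYz; rewrite /X => zx.
  by rewrite -zi zx.
- move=> _ v [w vw wv] hA.
  suff : cond_entropy p X Y = 0.
    by rewrite /cond_entropy hXY => /eqP; rewrite subr_eq0 => /eqP.
  apply: (@cond0 R _ p p0) => x x' px px' hY.
  have hg : forall j, g j (x j) = g j (x' j).
    by move=> j; move/ffunP: hY => /(_ j); rewrite !ffunE.
  suff hk : forall n (k : 'I_N), (k < n)%N -> x (v k) = x' (v k).
    rewrite /X; apply/ffunP => j; rewrite -(wv j); exact: (hk N).
  elim=> [//|n IH] k; rewrite ltnS leq_eqVlt => /orP [/eqP hk|/IH //].
  have hAk := hA k; cbv zeta in hAk.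
  apply: (@cond0_inv R _ p p0 _ _ _ _ hAk x x' px px').
  congr (_, _); first exact: hg.
  apply/ffunP => j; rewrite !ffunE; case: ifP => // /setIP [_ /imsetP [k' hk' ->]].
  congr Some; apply: IH; rewrite inE in hk'; by rewrite -hk.
Qed.
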